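(* Let $A$ be a $B$-algebra with a $B$-linear double bracket, $B=\bigoplus_{s\in I}\Bbbk e_s$, and let $e_1,e_2$ be two distinct idempotents of the family. Let $A_1=A^f_{e_2\to e_1}$ and $A_2=A^f_{e_1\to e_2}$ with their induced double brackets, and let $\pi_k:A\to A_k$ ($k=1,2$) be the maps $a\mapsto a^f$. Then there exists an isomorphism of algebras $\phi:A_1\to A_2$ with $\phi\circ\pi_1=\pi_2$ which is an isomorphism of double brackets, i.e. $\{\!\{\phi(a),\phi(b)\}\!\}_{A_2}=(\phi\otimes\phi)\{\!\{a,b\}\!\}_{A_1}$ for all $a,b\in A_1$.
   Context: $\Bbbk$ field of characteristic $0$; algebras associative, unital, finitely generated; $B=\bigoplus_{s\in I}\Bbbk e_s$ with orthogonal idempotents summing to $1$. Sweedler notation $d=d'\otimes d''$, $(d'\otimes d'')^\circ=d''\otimes d'$, outer bimodule $a(d'\otimes d'')b=ad'\otimes d''b$. A $B$-linear double bracket: bilinear $\{\!\{-,-\}\!\}:A\times A\to A\otimes A$ with $\{\!\{a,b\}\!\}=-\{\!\{b,a\}\!\}^\circ$, $\{\!\{a,bc\}\!\}=\{\!\{a,b\}\!\}c+b\{\!\{a,c\}\!\}$, zero if an argument lies in $B$. Fusion of $e_j$ onto $e_i$ ($i\ne j$): $\hat e=1-e_i-e_j$, $\bar A=A*_{\Bbbk e_i\oplus\Bbbk e_j\oplus\Bbbk\hat e}(\mathrm{Mat}_2(\Bbbk)\oplus\Bbbk\hat e)$ where $\mathrm{Mat}_2(\Bbbk)$ has matrix units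 $e_{ii}=e_i,e_{ij},e_{ji},e_{jj}=e_j$; $A^f_{e_j\to e_i}=\epsilon\bar A\epsilon$ with $\epsilon=1-e_j$, an algebra over $\bigoplus_{s\ne j}\Bbbk e_s$; $a^f=\epsilon a\epsilon+e_{ij}ae_{ji}+e_{ij}a\epsilon+\epsilon ae_{ji}$. $A^f$ is generated by elements $e_aaf_a$ with $a\in A$, $e_a\in\{\epsilon,e_{ij}\}$, $f_a\in\{\epsilon,e_{ji}\}$ of the forms $t$ ($t\in\epsilon A\epsilon$), $e_{ij}u$ ($u\in e_jA\epsilon$), $ve_{ji}$ ($v\in\epsilon Ae_j$), $e_{ij}we_{ji}$ ($w\in e_jAe_j$); the induced double bracket on $A^f$ is determined by $\{\!\{e_aaf_a,e_bbf_b\}\!\}=e_b\{\!\{a,b\}\!\}'f_a\otimes e_a\{\!\{a,b\}\!\}''f_b$. *)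

(* Defs.v *)
From HB Require Import structures.
From mathcomp Require Import all_boot all_order all_algebra.
Set Implicit Arguments. Unset Strict Implicit. Unset Printing Implicit Defensive.
Import GRing.Theory.
Local Open Scope ring_scope.

Section Tensors.
Variables (k : fieldType) (T : algType k).

(* An element of T (x)_k T is represented by a finite list of pure tensors
   sum_p p.1 (x) p.2.  Two such lists represent the same element of T (x) T
   iff every bilinear form T x T -> k takes the same value on them
   (linear functionals on T (x) T = bilinear forms, and over a field the
   algebraic dual separates points). *)
Definition tensor := seq (T * T).

Definition bilinear_form (f : T -> T -> k) : Prop :=
  (forall c x y z, f (c *: x + y) z = c * f x z + f y z) /\
  (forall c x y z, f z (c *: x + y) = c * f z x + f z y).

Definition tsum (f : T -> T -> k) (u : tensor) : k := \sum_(p <- u) f p.1 p.2.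

Definition teq (u v : tensor) : Prop :=
  forall f, bilinear_form f -> tsum f u = tsum f v.

Definition tscale (c : k) (u : tensor) : tensor := [seq (c *: p.1, p.2) | p <- u].
Definition topp (u : tensor) : tensor := [seq (- p.1, p.2) | p <- u].
Definition tswap (u : tensor) : tensor := [seq (p.2, p.1) | p <- u].
(* outer bimodule structure: a (d' (x) d'') b = a d' (x) d'' b *)
Definition tmull (a : T) (u : tensor) : tensor := [seq (a * p.1, p.2) | p <- u].
Definition tmulr (u : tensor) (b : T) : tensor := [seq (p.1, p.2 * b) | p <- u].

(* br is a double bracket on the subspace/subalgebra Dom of T (closed under the
   operations), which vanishes when an argument lies in the base inB. *)
Definition is_double_bracket (Dom inB : T -> Prop) (br : T -> T -> tensor) : Prop :=
  [/\ (forall c a a' b, Dom a -> Dom a' -> Dom b ->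
         teq (br (c *: a + a') b) (tscale c (br a b) ++ br a' b)),
      (forall c a b b', Dom a -> Dom b -> Dom b' ->
         teq (br a (c *: b + b')) (tscale c (br a b) ++ br a b')),
      (forall a b, Dom a -> Dom b -> teq (br a b) (topp (tswap (br b a)))),
      (forall a b c, Dom a -> Dom b -> Dom c ->
         teq (br a (b * c)) (tmulr (br a b) c ++ tmull b (br a c))) &
      (forall a b, Dom a -> Dom b -> inB a \/ inB b -> teq (br a b) [::])].

End Tensors.

Section Alg.
Variable k : fieldType.

Definition is_alg_hom (A D : algType k) (f : A -> D) : Prop :=
  [/\ forall c x y, f (c *: x + y) = c *: f x + f y,
      forall x y, f (x * y) = f x * f y & f 1 = 1].

Definition fin_gen (A : algType k) : Prop :=
  exists s : seq A, forall a : A, exists ws : seq (k * seq nat),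
    a = \sum_(w <- ws) w.1 *: \prod_(n <- w.2) s`_n.

(* e : I -> A is a family of nonzero orthogonal idempotents summing to 1,
   so B = (+)_s k e_s is a subalgebra of A. *)
Definition base_family (A : algType k) (I : finType) (e : I -> A) : Prop :=
  [/\ forall s t, e s * e t = (if s == t then e s else 0),
      \sum_s e s = 1 & forall s, e s != 0].

Definition inBase (A : algType k) (I : finType) (e : I -> A) (P : pred I) (x : A) : Prop :=
  exists c : I -> k, x = \sum_(s | P s) c s *: e s.

(* Relations satisfied by the images of the matrix units e_ij, e_ji under an
   algebra map from Mat_2(k) (+) k e^ agreeing with g on k e_i (+) k e_j (+) k e^
   (the remaining matrix-unit relations follow from these). *)
Definition mat_rel (A D : algType k) (I : finType) (e : I -> A) (i j : I)
  (g : A -> D) (y z : D) : Prop :=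
  [/\ y * z = g (e i), z * y = g (e j),
      g (e i) * y = y /\ y * g (e j) = y &
      g (e j) * z = z /\ z * g (e i) = z].

(* (Abar, iota, xij, xji) is the amalgamated free product
   A *_{k e_i (+) k e_j (+) k e^} (Mat_2(k) (+) k e^), given by its universal
   property; xij, xji are the images of the matrix units e_ij, e_ji. *)
Definition is_fusion_free_product (A : algType k) (I : finType) (e : I -> A) (i j : I)
  (Abar : algType k) (iota : A -> Abar) (xij xji : Abar) : Prop :=
  [/\ is_alg_hom iota, mat_rel e i j iota xij xji &
      forall (D : algType k) (g : A -> D) (y z : D),
        is_alg_hom g -> mat_rel e i j g y z ->
        exists h : Abar -> D,
          [/\ is_alg_hom h, (forall a, h (iota a) = g a), h xij = y, h xji = z &
              forall h' : Abar -> D, is_alg_hom h' -> (forall a, h' (iota a) = g a) ->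
                h' xij = y -> h' xji = z -> forall x, h' x = h x]].

Definition feps (A Abar : algType k) (I : finType) (e : I -> A) (j : I) (iota : A -> Abar) : Abar :=
  1 - iota (e j).

(* membership in the corner algebra A^f = epsilon Abar epsilon *)
Definition in_corner (Abar : algType k) (eps : Abar) (x : Abar) : Prop := eps * x * eps = x.

Definition fmap (A Abar : algType k) (iota : A -> Abar) (xij xji eps : Abar) (a : A) : Abar :=
  eps * iota a * eps + xij * iota a * xji + xij * iota a * eps + eps * iota a * xji.

(* (ea, fa, a) describes a generator ea a fa of A^f of one of the four forms *)
Definition gen_form (A Abar : algType k) (I : finType) (e : I -> A) (j : I)
  (xij xji eps : Abar) (ea fa : Abar) (a : A) : Prop :=
  [\/ [/\ ea = eps, fa = eps & (1 - e j) * a * (1 - e j) = a],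
      [/\ ea = xij, fa = eps & e j * a * (1 - e j) = a],
      [/\ ea = eps, fa = xji & (1 - e j) * a * e j = a] |
      [/\ ea = xij, fa = xji & e j * a * e j = a]].

(* brf is the induced double bracket on A^f: it is a double bracket on the
   corner algebra over the base (+)_{s != j} k e_s, and satisfies the
   defining formula on generators. *)
Definition induced_bracket (A Abar : algType k) (I : finType) (e : I -> A) (j : I)
  (br : A -> A -> tensor A) (iota : A -> Abar) (xij xji : Abar)
  (brf : Abar -> Abar -> tensor Abar) : Prop :=
  let eps := feps e j iota in
  is_double_bracket (in_corner eps) (inBase (iota \o e) (fun s => s != j)) brf /\
  forall ea fa eb fb a b,
    gen_form e j xij xji eps ea fa a -> gen_form e j xij xji eps eb fb b ->
    teq (brf (ea * iota a * fa) (eb * iota b * fb))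
        [seq (eb * iota p.1 * fa, ea * iota p.2 * fb) | p <- br a b].

End Alg.

(* Main.v *)
Require Import Defs.
From HB Require Import structures.
From mathcomp Require Import all_boot all_order all_algebra.
From Stdlib Require Import ClassicalEpsilon.
Import GRing.Theory.
Local Open Scope ring_scope.
Set Implicit Arguments. Unset Strict Implicit. Unset Printing Implicit Defensive.
Definition pb (P : Prop) : bool := if excluded_middle_informative P then true else false.
Lemma pbP P : reflect P (pb P).
Proof. rewrite /pb; case: excluded_middle_informative => h; by constructor. Qed.

Section SubAlg.
Variables (k : fieldType) (T : algType k) (S : T -> Prop).
Inductive Cl : T -> Prop :=
| Cl_base x : S x -> Cl x
| Cl_1 : Cl 1
| Cl_lin c x y : Cl x -> Cl y -> Cl (c *: x + y)
| Cl_mul x y : Cl x -> Cl y -> Cl (x * y).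
Definition clb (x : T) : bool := pb (Cl x).
Record subT := SubT { subv : T; _ : clb subv }.
HB.instance Definition _ := [isSub for subv].
HB.instance Definition _ := [Choice of subT by <:].
Lemma Cl0 : Cl 0.
Proof. have -> : (0:T) = (-1) *: 1 + 1 by rewrite scaleN1r addNr.
by apply: Cl_lin; apply Cl_1. Qed.
Lemma clb_closed : GRing.subsemialg_closed clb.
Proof.
split.
- by apply/pbP; apply Cl_1.
- split; first by apply/pbP; apply Cl0.
  move=> x y /pbP hx /pbP hy; apply/pbP; rewrite -[x]scale1r; exact: Cl_lin.
- move=> c x /pbP hx; apply/pbP; rewrite -[_ *: _]addr0; apply: Cl_lin => //; exact: Cl0.
- move=> x y /pbP hx /pbP hy; apply/pbP; exact: Cl_mul.
Qed.
HB.instance Definition _ := GRing.SubChoice_isSubAlgebra.Build k T clb subT clb_closed.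
End SubAlg.
Section Lin.
Variables (k : fieldType) (T T' : lmodType k).
Definition lin (f : T -> T') := forall c x y, f (c *: x + y) = c *: f x + f y.
Variable f : T -> T'.
Hypothesis hf : lin f.
Lemma lin0 : f 0 = 0.
Proof. have h := hf 1 0 0; rewrite !scale1r addr0 in h; by apply: (addrI (f 0)); rewrite addr0 -h. Qed.
Lemma linD x y : f (x + y) = f x + f y.
Proof. by have := hf 1 x y; rewrite !scale1r. Qed.
Lemma linZ c x : f (c *: x) = c *: f x.
Proof. by have := hf c x 0; rewrite !addr0 lin0 addr0. Qed.
Lemma linN x : f (- x) = - f x.
Proof. by rewrite -scaleN1r linZ scaleN1r. Qed.
Lemma linB x y : f (x - y) = f x - f y.
Proof. by rewrite linD linN. Qed.
End Lin.

Section Tens.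
Variables (k : fieldType) (T T' : algType k).

Lemma teq_refl (u : tensor T) : teq u u. Proof. by []. Qed.
Lemma teq_sym (u v : tensor T) : teq u v -> teq v u.
Proof. by move=> h f hf; rewrite h. Qed.
Lemma teq_trans (u v w : tensor T) : teq u v -> teq v w -> teq u w.
Proof. by move=> h1 h2 f hf; rewrite h1 // h2. Qed.
Lemma tsum_cat f (u v : tensor T) : tsum f (u ++ v) = tsum f u + tsum f v.
Proof. by rewrite /tsum big_cat. Qed.
Lemma teq_cat (u u' v v' : tensor T) : teq u u' -> teq v v' -> teq (u ++ v) (u' ++ v').
Proof. by move=> h1 h2 f hf; rewrite !tsum_cat h1 // h2. Qed.

Section Bil.
Variable F : T' -> T' -> k.
Hypothesis hF : bilinear_form F.
Lemma bilDl x y z : F (x + y) z = F x z + F y z.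
Proof. by have := hF.1 1 x y z; rewrite scale1r mul1r. Qed.
Lemma bilDr x y z : F z (x + y) = F z x + F z y.
Proof. by have := hF.2 1 x y z; rewrite scale1r mul1r. Qed.
Lemma bil0l z : F 0 z = 0.
Proof. have h := bilDl 0 0 z; rewrite addr0 in h; by apply: (addrI (F 0 z)); rewrite addr0 -h. Qed.
Lemma bil0r z : F z 0 = 0.
Proof. have h := bilDr 0 0 z; rewrite addr0 in h; by apply: (addrI (F z 0)); rewrite addr0 -h. Qed.
Lemma bilZl c x z : F (c *: x) z = c * F x z.
Proof. by have := hF.1 c x 0 z; rewrite addr0 bil0l addr0. Qed.
Lemma bilZr c x z : F z (c *: x) = c * F z x.
Proof. by have := hF.2 c x 0 z; rewrite addr0 bil0r addr0. Qed.
End Bil.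

Lemma teq_map (f g : T -> T') (u v : tensor T) : lin f -> lin g -> teq u v ->
  teq [seq (f p.1, g p.2) | p <- u] [seq (f p.1, g p.2) | p <- v].
Proof.
move=> hf hg h F hF; rewrite /tsum !big_map /=.
have hb : bilinear_form (fun x y => F (f x) (g y)).
  split=> c x y z; [by rewrite hf hF.1 | by rewrite hg hF.2].
exact: (h _ hb).
Qed.

Lemma teq_mapS (f g : T -> T') (u v : tensor T) : lin f -> lin g -> teq u v ->
  teq [seq (f p.2, g p.1) | p <- u] [seq (f p.2, g p.1) | p <- v].
Proof.
move=> hf hg h F hF; rewrite /tsum !big_map /=.
have hb : bilinear_form (fun y x => F (f x) (g y)).
  split=> c x y z; [by rewrite hg hF.2 | by rewrite hf hF.1].
exact: (h _ hb).
Qed.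

Lemma teq_eq (u v : tensor T') : u = v -> teq u v. Proof. by move->. Qed.

Variable U : Type.
Lemma teq_splitl (h1 h2 g : U -> T') (u : seq U) :
  teq [seq (h1 p + h2 p, g p) | p <- u] ([seq (h1 p, g p) | p <- u] ++ [seq (h2 p, g p) | p <- u]).
Proof.
move=> F hF; rewrite /tsum big_cat !big_map /= -big_split /=.
by apply: eq_bigr => p _; rewrite bilDl.
Qed.
Lemma teq_splitr (h1 h2 g : U -> T') (u : seq U) :
  teq [seq (g p, h1 p + h2 p) | p <- u] ([seq (g p, h1 p) | p <- u] ++ [seq (g p, h2 p) | p <- u]).
Proof.
move=> F hF; rewrite /tsum big_cat !big_map /= -big_split /=.
by apply: eq_bigr => p _; rewrite bilDr.
Qed.
Lemma teq_scalel c (h g : U -> T') (u : seq U) :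
  teq [seq (c *: h p, g p) | p <- u] (tscale c [seq (h p, g p) | p <- u]).
Proof. by apply: teq_eq; rewrite /tscale -map_comp. Qed.
Lemma teq_scaler c (h g : U -> T') (u : seq U) :
  teq [seq (h p, c *: g p) | p <- u] (tscale c [seq (h p, g p) | p <- u]).
Proof.
move=> F hF; rewrite /tsum /tscale -map_comp !big_map /=.
by apply: eq_bigr => p _; rewrite (bilZr hF) (bilZl hF).
Qed.
End Tens.

Lemma lin_id (k : fieldType) (T : lmodType k) : lin (@id T).
Proof. by []. Qed.
Lemma lin_opp (k : fieldType) (T : lmodType k) : lin (fun x : T => - x).
Proof. by move=> c x y; rewrite opprD scalerN. Qed.
Lemma lin_mulr (k : fieldType) (T : algType k) (a : T) : lin (fun x => x * a).
Proof. by move=> c x y; rewrite mulrDl scalerAl. Qed.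
Lemma lin_mull (k : fieldType) (T : algType k) (a : T) : lin (fun x => a * x).
Proof. by move=> c x y; rewrite mulrDr scalerAr. Qed.
Lemma lin_comp (k : fieldType) (T1 T2 T3 : lmodType k) (f : T2 -> T3) (g : T1 -> T2) :
  lin f -> lin g -> lin (fun x => f (g x)).
Proof. by move=> hf hg c x y; rewrite hg hf. Qed.
Lemma lin_lr (k : fieldType) (T : algType k) (l r : T) : lin (fun x => l * x * r).
Proof. by move=> c x y; rewrite mulrDr mulrDl -scalerAr -scalerAl. Qed.
Section BrA.
Variables (k : fieldType) (A : algType k) (I : finType) (e : I -> A).
Hypothesis he : base_family e.
Variable br : A -> A -> tensor A.
Hypothesis hbr : is_double_bracket (fun _ => True) (inBase e predT) br.
Local Notation B := (inBase e predT).

Lemma B_lin c x y : B x -> B y -> B (c *: x + y).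
Proof.
case=> cx -> [cy ->]; exists (fun s => c * cx s + cy s).
rewrite scaler_sumr -big_split /=; apply: eq_bigr => s _.
by rewrite scalerDl scalerA.
Qed.
Lemma B_e s : B (e s).
Proof.
exists (fun t => (t == s)%:R); rewrite (bigD1 s) //= big1 ?addr0 ?eqxx ?scale1r //.
by move=> t /negbTE ->; rewrite scale0r.
Qed.
Lemma B_1 : B 1.
Proof. case: he => _ h1 _; exists (fun _ => 1); rewrite -h1; apply: eq_bigr => s _; by rewrite scale1r. Qed.
Lemma B_0 : B 0.
Proof. exists (fun _ => 0); rewrite big1 // => s _; by rewrite scale0r. Qed.
Lemma B_add x y : B x -> B y -> B (x + y).
Proof. by move=> hx hy; rewrite -[x]scale1r; apply: B_lin. Qed.
Lemma B_opp x : B x -> B (- x).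
Proof. by move=> hx; rewrite -scaleN1r -[_ *: _]addr0; apply: B_lin => //; apply: B_0. Qed.
Lemma B_sub x y : B x -> B y -> B (x - y).
Proof. by move=> hx hy; apply: B_add => //; apply: B_opp. Qed.

Lemma toppswap (T : algType k) (u : tensor T) : topp (tswap u) = [seq (- p.2, p.1) | p <- u].
Proof. by rewrite /topp /tswap -map_comp. Qed.

Lemma br_B_r a b : B b -> teq (br a b) [::].
Proof. by move=> hb; case: hbr => _ _ _ _ h; apply: h => //; right. Qed.

Lemma bl_mull a b c : B c -> teq (br a (c * b)) (tmull c (br a b)).
Proof.
move=> hc; case: hbr => _ _ _ hL _.
apply: teq_trans (hL a c b Logic.I Logic.I Logic.I) _.
have -> : tmull c (br a b) = [::] ++ tmull c (br a b) by [].
apply: teq_cat; last exact: teq_refl.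
have := teq_map (@lin_id _ _) (lin_mulr b) (br_B_r a hc); exact.
Qed.

Lemma bl_mulr a b c : B c -> teq (br a (b * c)) (tmulr (br a b) c).
Proof.
move=> hc; case: hbr => _ _ _ hL _.
apply: teq_trans (hL a b c Logic.I Logic.I Logic.I) _.
rewrite -[X in teq _ X]cats0; apply: teq_cat; first exact: teq_refl.
have := teq_map (lin_mull b) (@lin_id _ _) (br_B_r a hc); exact.
Qed.

Lemma bl_right a b c d : B c -> B d ->
  teq (br a (c * b * d)) [seq (c * p.1, p.2 * d) | p <- br a b].
Proof.
move=> hc hd; apply: teq_trans (bl_mulr _ _ hd) _.
have := teq_map (@lin_id _ _) (lin_mulr d) (bl_mull a b hc).
by rewrite /tmulr /tmull -map_comp.
Qed.

Lemma bl_left a b c d : B c -> B d ->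
  teq (br (c * a * d) b) [seq (p.1 * d, c * p.2) | p <- br a b].
Proof.
move=> hc hd; case: hbr => _ _ hS _ _.
apply: teq_trans (hS _ _ Logic.I Logic.I) _; rewrite toppswap.
apply: teq_trans (teq_mapS (@lin_opp _ _) (@lin_id _ _) (bl_right b a hc hd)) _.
apply: teq_sym.
apply: teq_trans (teq_map (lin_mulr d) (lin_mull c) (hS a b Logic.I Logic.I)) _.
rewrite toppswap -!map_comp; apply: teq_eq; apply: eq_map => p /=.
by rewrite mulNr.
Qed.

Lemma Blin a b c d c' d' : B c -> B d -> B c' -> B d' ->
  teq (br (c * a * d) (c' * b * d')) [seq (c' * p.1 * d, c * p.2 * d') | p <- br a b].
Proof.
move=> hc hd hc' hd'.
apply: teq_trans (bl_left _ _ hc hd) _.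
apply: teq_trans (teq_map (lin_mulr d) (lin_mull c) (bl_right a b hc' hd')) _.
by rewrite -map_comp; apply: teq_eq; apply: eq_map => p /=; rewrite mulrA.
Qed.
End BrA.
Lemma lin_scale (k : fieldType) (T : lmodType k) (c : k) : lin (fun x : T => c *: x).
Proof. by move=> d x y; rewrite scalerDr !scalerA mulrC. Qed.
Lemma teq_tscale (k : fieldType) (T : algType k) c (u v : tensor T) : teq u v -> teq (tscale c u) (tscale c v).
Proof.
move=> h; have := teq_map (lin_scale c) (@lin_id _ _) h; exact.
Qed.

Lemma corner_lin (k : fieldType) (T : algType k) (E : T) c x y :
  in_corner E x -> in_corner E y -> in_corner E (c *: x + y).
Proof. by rewrite /in_corner => h1 h2; rewrite mulrDr mulrDl -scalerAr -scalerAl h1 h2. Qed.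

Lemma split4 (k : fieldType) (T : algType k) (l x y r E F G : T) :
  l * x * (E * E + F * G) * y * r = (l * x * E) * (E * y * r) + (l * x * F) * (G * y * r).
Proof. by rewrite mulrDr !mulrDl !mulrA. Qed.

Section Fusion.
Variables (k : fieldType) (A : algType k) (I : finType) (e : I -> A).
Hypothesis he : base_family e.
Variable br : A -> A -> tensor A.
Hypothesis hbr : is_double_bracket (fun _ => True) (inBase e predT) br.
Variables (i j : I) (Abar : algType k) (io : A -> Abar) (xij xji : Abar).
Hypothesis hij : i != j.
Hypothesis hA : is_fusion_free_product e i j io xij xji.
Variable brf : Abar -> Abar -> tensor Abar.
Hypothesis hbrf : induced_bracket e j br io xij xji brf.
Local Notation B := (inBase e predT).
Local Notation eps := (feps e j io).

Lemma io_lin : lin io. Proof. by case: hA => -[]. Qed.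
Lemma io_mul x y : io (x * y) = io x * io y. Proof. by case: hA => -[]. Qed.
Lemma io_1 : io 1 = 1. Proof. by case: hA => -[]. Qed.
Lemma io_0 : io 0 = 0. Proof. by have := lin0 io_lin. Qed.
Lemma io_B x y : io (x - y) = io x - io y. Proof. by have := linB io_lin x y. Qed.
Lemma io_D x y : io (x + y) = io x + io y. Proof. by have := linD io_lin x y. Qed.
Lemma io_N x : io (- x) = - io x. Proof. by have := linN io_lin x. Qed.

Lemma m1 : xij * xji = io (e i). Proof. by case: hA => _ [] . Qed.
Lemma m2 : xji * xij = io (e j). Proof. by case: hA => _ [] . Qed.
Lemma m3 : io (e i) * xij = xij. Proof. by case: hA => _ [] _ _ []. Qed.
Lemma m4 : xij * io (e j) = xij. Proof. by case: hA => _ [] _ _ []. Qed.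
Lemma m5 : io (e j) * xji = xji. Proof. by case: hA => _ [] _ _ _ []. Qed.
Lemma m6 : xji * io (e i) = xji. Proof. by case: hA => _ [] _ _ _ []. Qed.

Lemma ee s t : e s * e t = if s == t then e s else 0. Proof. by case: he. Qed.
Lemma Eii : io (e i) * io (e i) = io (e i). Proof. by rewrite -io_mul ee eqxx. Qed.
Lemma Ejj : io (e j) * io (e j) = io (e j). Proof. by rewrite -io_mul ee eqxx. Qed.
Lemma Eij : io (e i) * io (e j) = 0. Proof. by rewrite -io_mul ee (negbTE hij) io_0. Qed.
Lemma Eji : io (e j) * io (e i) = 0. Proof. by rewrite -io_mul ee eq_sym (negbTE hij) io_0. Qed.

Lemma epsE : eps = 1 - io (e j). Proof. by []. Qed.
Lemma eps_io : eps = io (1 - e j). Proof. by rewrite io_B io_1. Qed.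
Lemma eps_eps : eps * eps = eps.
Proof. by rewrite epsE mulrBl mul1r mulrBr mulr1 Ejj subrr subr0. Qed.
Lemma Ej_xij : io (e j) * xij = 0. Proof. by rewrite -m3 mulrA Eji mul0r. Qed.
Lemma xji_Ej : xji * io (e j) = 0. Proof. by rewrite -m6 -mulrA Eij mulr0. Qed.
Lemma eps_xij : eps * xij = xij. Proof. by rewrite epsE mulrBl mul1r Ej_xij subr0. Qed.
Lemma xij_eps : xij * eps = 0. Proof. by rewrite epsE mulrBr mulr1 m4 subrr. Qed.
Lemma eps_xji : eps * xji = 0. Proof. by rewrite epsE mulrBl mul1r m5 subrr. Qed.
Lemma xji_eps : xji * eps = xji. Proof. by rewrite epsE mulrBr mulr1 xji_Ej subr0. Qed.
Lemma xij_xij : xij * xij = 0. Proof. by rewrite -{1}m4 -mulrA Ej_xij mulr0. Qed.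
Lemma xji_xji : xji * xji = 0. Proof. by rewrite -{2}m5 mulrA xji_Ej mul0r. Qed.
Lemma one_split : 1 = eps + xji * xij. Proof. by rewrite m2 epsE subrK. Qed.
Lemma eps_Ei : eps * io (e i) = io (e i). Proof. by rewrite epsE mulrBl mul1r Eji subr0. Qed.
Lemma Ei_eps : io (e i) * eps = io (e i). Proof. by rewrite epsE mulrBr mulr1 Eij subr0. Qed.

Definition Lp l := l = eps \/ l = xij.
Definition Rp r := r = eps \/ r = xji.
Definition Lc l := eps * l = l.
Definition Rc r := r * eps = r.
Lemma Lp_Lc l : Lp l -> Lc l. Proof. by case=> ->; rewrite /Lc ?eps_eps ?eps_xij. Qed.
Lemma Rp_Rc r : Rp r -> Rc r. Proof. by case=> ->; rewrite /Rc ?eps_eps ?xji_eps. Qed.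
Lemma corner_lr l r x : Lc l -> Rc r -> in_corner eps (l * x * r).
Proof. by rewrite /in_corner /Lc /Rc => hl hr; rewrite !mulrA hl -mulrA hr. Qed.

Lemma gen_block l r : Lp l -> Rp r -> exists P, exists Q,
  [/\ B P, B Q, l * io P = l, io Q * r = r & forall a, gen_form e j xij xji eps l r (P * a * Q)].
Proof.
have pp : (1 - e j) * (1 - e j) = 1 - e j.
  by rewrite mulrBl mul1r mulrBr mulr1 ee eqxx subrr subr0.
have qq : e j * e j = e j by rewrite ee eqxx.
have Bp : B (1 - e j) by apply: B_sub; [exact: B_1 | exact: B_e].
have Bq : B (e j) by apply: B_e.
have hlp : eps * io (1 - e j) = eps by rewrite -eps_io eps_eps.
have hrp : io (1 - e j) * eps = eps by rewrite -eps_io eps_eps.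
have sw : forall p q a : A, p * p = p -> q * q = q -> p * (p * a * q) * q = p * a * q.
  by move=> p q a hp hq; rewrite !mulrA hp -mulrA hq.
case=> -> [] ->.
- exists (1 - e j), (1 - e j); split=> // a; constructor 1; split=> //; exact: sw.
- exists (1 - e j), (e j); split=> //; first by rewrite m5.
  by move=> a; constructor 3; split=> //; exact: sw.
- exists (e j), (1 - e j); split=> //; first by rewrite m4.
  by move=> a; constructor 2; split=> //; exact: sw.
- exists (e j), (e j); split=> //; [by rewrite m4 | by rewrite m5 |].
  by move=> a; constructor 4; split=> //; exact: sw.
Qed.

Definition Gd l r l' r' := forall a b,
  teq (brf (l * io a * r) (l' * io b * r')) [seq (l' * io p.1 * r, l * io p.2 * r') | p <- br a b].

Lemma lin_lio l r : lin (fun x => l * io x * r).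
Proof. exact: lin_comp (lin_lr l r) io_lin. Qed.

Lemma sandwich l r P Q x : l * io P = l -> io Q * r = r -> l * io (P * x * Q) * r = l * io x * r.
Proof. by move=> hl hr; rewrite !io_mul !mulrA hl -mulrA hr. Qed.

Lemma gen_Gd l r l' r' : Lp l -> Rp r -> Lp l' -> Rp r' -> Gd l r l' r'.
Proof.
move=> hl hr hl' hr' a b.
have [P [Q [BP BQ hP hQ hg]]] := gen_block hl hr.
have [P' [Q' [BP' BQ' hP' hQ' hg']]] := gen_block hl' hr'.
rewrite -(sandwich a hP hQ) -(sandwich b hP' hQ').
case: hbrf => _ h2.
apply: teq_trans (h2 _ _ _ _ _ _ (hg a) (hg' b)) _.
apply: teq_trans (teq_map (lin_lio l' r) (lin_lio l r') (Blin hbr a b BP BQ BP' BQ')) _.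
by rewrite -map_comp; apply: teq_eq; apply: eq_map => p /=; rewrite !sandwich.
Qed.

Lemma Gd_sym l r l' r' : Lc l -> Rc r -> Lc l' -> Rc r' -> Gd l r l' r' -> Gd l' r' l r.
Proof.
move=> hl hr hl' hr' H a b.
case: hbrf => [[_ _ hS _ _] _].
have c1 := corner_lr (io a) hl' hr'; have c2 := corner_lr (io b) hl hr.
apply: teq_trans (hS _ _ c1 c2) _; rewrite toppswap.
apply: teq_trans (teq_mapS (@lin_opp _ _) (@lin_id _ _) (H b a)) _.
apply: teq_sym; case: hbr => _ _ hSA _ _.
apply: teq_trans (teq_map (lin_lio l r') (lin_lio l' r) (hSA a b Logic.I Logic.I)) _.
rewrite toppswap -!map_comp; apply: teq_eq; apply: eq_map => p /=.
by rewrite io_N mulrN mulNr.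
Qed.

Lemma Gd_addl c l1 l2 r l' r' : Lc l1 -> Lc l2 -> Rc r -> Lc l' -> Rc r' ->
  Gd l1 r l' r' -> Gd l2 r l' r' -> Gd (c *: l1 + l2) r l' r'.
Proof.
move=> h1 h2 hr hl' hr' H1 H2 a b.
case: hbrf => [[hL _ _ _ _] _].
have -> : (c *: l1 + l2) * io a * r = c *: (l1 * io a * r) + l2 * io a * r
  by rewrite !mulrDl -!scalerAl.
apply: teq_trans (hL _ _ _ _ (corner_lr _ h1 hr) (corner_lr _ h2 hr) (corner_lr _ hl' hr')) _.
apply: teq_trans (teq_cat (teq_tscale c (H1 a b)) (H2 a b)) _.
apply: teq_sym.
have -> : [seq (l' * io p.1 * r, (c *: l1 + l2) * io p.2 * r') | p <- br a b] =
   [seq (l' * io p.1 * r, c *: (l1 * io p.2 * r') + l2 * io p.2 * r') | p <- br a b].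
  by apply: eq_map => p; rewrite !mulrDl -!scalerAl.
apply: teq_trans (teq_splitr _ _ _ _) _.
apply: teq_cat; last exact: teq_refl.
exact: teq_scaler.
Qed.

Lemma Gd_addr c l r1 r2 l' r' : Lc l -> Rc r1 -> Rc r2 -> Lc l' -> Rc r' ->
  Gd l r1 l' r' -> Gd l r2 l' r' -> Gd l (c *: r1 + r2) l' r'.
Proof.
move=> hl h1 h2 hl' hr' H1 H2 a b.
case: hbrf => [[hL _ _ _ _] _].
have -> : l * io a * (c *: r1 + r2) = c *: (l * io a * r1) + l * io a * r2
  by rewrite mulrDr -scalerAr.
apply: teq_trans (hL _ _ _ _ (corner_lr _ hl h1) (corner_lr _ hl h2) (corner_lr _ hl' hr')) _.
apply: teq_trans (teq_cat (teq_tscale c (H1 a b)) (H2 a b)) _.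
apply: teq_sym.
have -> : [seq (l' * io p.1 * (c *: r1 + r2), l * io p.2 * r') | p <- br a b] =
   [seq (c *: (l' * io p.1 * r1) + l' * io p.1 * r2, l * io p.2 * r') | p <- br a b].
  by apply: eq_map => p; rewrite mulrDr -scalerAr.
apply: teq_trans (teq_splitl _ _ _ _) _.
apply: teq_cat; last exact: teq_refl.
exact: teq_scalel.
Qed.

Lemma Gd_mulB b0 l r l' r' : B b0 -> Gd l r l' r' -> Gd (l * io b0) r l' r'.
Proof.
move=> hB H a b.
have -> : l * io b0 * io a * r = l * io (b0 * a * 1) * r by rewrite mulr1 io_mul mulrA.
apply: teq_trans (H _ b) _.
apply: teq_trans (teq_map (lin_lio l' r) (lin_lio l r') (bl_left hbr a b hB (B_1 he))) _.
by rewrite -map_comp; apply: teq_eq; apply: eq_map => p /=; rewrite mulr1 io_mul mulrA.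
Qed.

Lemma Gd_mulBr g0 l r l' r' : B g0 -> Gd l r l' r' -> Gd l (io g0 * r) l' r'.
Proof.
move=> hB H a b.
have -> : l * io a * (io g0 * r) = l * io (1 * a * g0) * r by rewrite mul1r io_mul !mulrA.
apply: teq_trans (H _ b) _.
apply: teq_trans (teq_map (lin_lio l' r) (lin_lio l r') (bl_left hbr a b (B_1 he) hB)) _.
by rewrite -map_comp; apply: teq_eq; apply: eq_map => p /=; rewrite mul1r io_mul !mulrA.
Qed.

Definition Lspan l := exists b0, exists g0, [/\ B b0, B g0 & l = eps * io b0 + xij * io g0].
Definition Rspan r := exists b0, exists g0, [/\ B b0, B g0 & r = io b0 * eps + io g0 * xji].
Lemma Lspan_Lc l : Lspan l -> Lc l.
Proof. by case=> b0 [g0 [_ _ ->]]; rewrite /Lc mulrDr !mulrA eps_eps eps_xij. Qed.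
Lemma Rspan_Rc r : Rspan r -> Rc r.
Proof. by case=> b0 [g0 [_ _ ->]]; rewrite /Rc mulrDl -!mulrA eps_eps xji_eps. Qed.

Lemma Gd_span1 L R : (forall l0 r0, Lp l0 -> Rp r0 -> Gd l0 r0 L R) -> Lc L -> Rc R ->
  forall l r, Lspan l -> Rspan r -> Gd l r L R.
Proof.
move=> H hL hR l r [b0 [g0 [Bb Bg ->]]] [b1 [g1 [Bb1 Bg1 ->]]].
have Hlr : forall l0 r0 d d', Lp l0 -> Rp r0 -> B d -> B d' -> Gd (l0 * io d) (io d' * r0) L R.
  move=> l0 r0 d d' h0 h0' hd hd'; apply: Gd_mulB => //; apply: Gd_mulBr => //; exact: H.
have Lc1 : forall l0 d, Lp l0 -> Lc (l0 * io d).
  by move=> l0 d /Lp_Lc h; rewrite /Lc mulrA h.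
have Rc1 : forall r0 d, Rp r0 -> Rc (io d * r0).
  by move=> r0 d /Rp_Rc h; rewrite /Rc -mulrA h.
have Hl : forall l0 d, Lp l0 -> B d -> Gd (l0 * io d) (io b1 * eps + io g1 * xji) L R.
  move=> l0 d h0 hd; rewrite -[io b1 * eps]scale1r.
  apply: Gd_addr => //; try apply: Rc1; try apply: Lc1 => //; try (by left); try (by right).
  + by apply: Hlr => //; left.
  + by apply: Hlr => //; right.
rewrite -[eps * io b0]scale1r; apply: Gd_addl => //.
- by apply: Lc1; left.
- by apply: Lc1; right.
- by apply: Rspan_Rc; exists b1, g1.
- by apply: Hl => //; left.
- by apply: Hl => //; right.
Qed.

Lemma Gd_span l r l' r' : Lspan l -> Rspan r -> Lspan l' -> Rspan r' -> Gd l r l' r'.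
Proof.
move=> hl hr hl' hr'.
have H1 : forall l0 r0, Lp l0 -> Rp r0 -> forall l r, Lspan l -> Rspan r -> Gd l r l0 r0.
  move=> l0 r0 h0 h0'; apply: Gd_span1; last by apply: Rp_Rc.
    by move=> l1 r1 h1 h1'; apply: gen_Gd.
  exact: Lp_Lc.
apply: Gd_sym; [exact: Lspan_Lc | exact: Rspan_Rc | exact: Lspan_Lc | exact: Rspan_Rc |].
apply: Gd_span1 => //; [| exact: Lspan_Lc | exact: Rspan_Rc].
move=> l0 r0 h0 h0'; apply: Gd_sym; [exact: Lspan_Lc | exact: Rspan_Rc | exact: Lp_Lc | exact: Rp_Rc |].
exact: H1.
Qed.

Inductive Gen : Abar -> Prop :=
| Gen_g l r a : Lp l -> Rp r -> Gen (l * io a * r)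
| Gen_lin c x y : Gen x -> Gen y -> Gen (c *: x + y)
| Gen_mul x y : Gen x -> Gen y -> Gen (x * y).

Lemma corner_l x : in_corner eps x -> eps * x = x.
Proof. by move=> h; rewrite -h !mulrA eps_eps. Qed.
Lemma corner_r x : in_corner eps x -> x * eps = x.
Proof. by move=> h; rewrite -h -mulrA eps_eps. Qed.

Lemma Gen_corner x : Gen x -> in_corner eps x.
Proof.
elim=> [l r a hl hr | c x1 y1 _ h1 _ h2 | x1 y1 _ h1 _ h2].
- exact: corner_lr (Lp_Lc hl) (Rp_Rc hr).
- exact: corner_lin.
- by rewrite /in_corner mulrA (corner_l h1) -mulrA (corner_r h2).
Qed.

Lemma Gen0 : Gen 0.
Proof.
have := @Gen_g eps eps 0 (or_introl erefl) (or_introl erefl).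
by rewrite io_0 mulr0 mul0r.
Qed.

Definition Sset (x : Abar) := (exists a, x = io a) \/ x = xij \/ x = xji.

Lemma all_Cl x : Cl Sset x.
Proof.
pose D := @subT k Abar Sset.
have Sin : forall y, Sset y -> clb Sset y by move=> y h; apply/pbP; apply: Cl_base.
pose g (a : A) : D := @SubT k Abar Sset (io a) (Sin (io a) (or_introl (ex_intro _ a erefl))).
pose yD : D := @SubT k Abar Sset xij (Sin xij (or_intror (or_introl erefl))).
pose zD : D := @SubT k Abar Sset xji (Sin xji (or_intror (or_intror erefl))).
have hg : is_alg_hom g.
  split.
  - by move=> c x1 y1; apply: val_inj; rewrite /= io_lin.
  - by move=> x1 y1; apply: val_inj; rewrite /= io_mul.
  - by apply: val_inj; rewrite /= io_1.
have hm : mat_rel e i j g yD zD.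
  by split; try split; apply: val_inj; rewrite /= ?m1 ?m2 ?m3 ?m4 ?m5 ?m6.
case: hA => hio hmr hU.
have [h [hh hhg hhy hhz _]] := hU D g yD zD hg hm.
have [h0 [_ _ _ _ hu]] := hU Abar io xij xji hio hmr.
have e1 : forall y, y = h0 y.
  by apply: (hu id) => //; split.
have e2 : forall y, @subv k Abar Sset (h y) = h0 y.
  apply: (hu (fun y => @subv k Abar Sset (h y))).
  - case: hh => h1 h2 h3; split.
    + by move=> c x1 y1; rewrite h1.
    + by move=> x1 y1; rewrite h2.
    + by rewrite h3.
  - by move=> a; rewrite hhg.
  - by rewrite hhy.
  - by rewrite hhz.
rewrite (e1 x) -e2; apply/pbP; by case: (h x).
Qed.

Lemma Cl_Tp x : Cl Sset x -> forall l r, Lp l -> Rp r -> Gen (l * x * r).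
Proof.
elim=> [y [[a ->] | [-> | ->]] | | c x1 y1 _ h1 _ h2 | x1 y1 _ h1 _ h2] l r hl hr.
- exact: Gen_g.
- case: hl => ->; case: hr => ->.
  + by rewrite eps_xij xij_eps; apply: Gen0.
  + have -> : eps * xij * xji = eps * io (e i) * eps by rewrite eps_xij m1 eps_Ei Ei_eps.
    by apply: Gen_g; left.
  + by rewrite xij_xij !mul0r; apply: Gen0.
  + by rewrite xij_xij !mul0r; apply: Gen0.
- case: hl => ->; case: hr => ->.
  + by rewrite eps_xji mul0r; apply: Gen0.
  + by rewrite eps_xji !mul0r; apply: Gen0.
  + have -> : xij * xji * eps = eps * io (e i) * eps by rewrite m1 eps_Ei Ei_eps.
    by apply: Gen_g; left.
  + by rewrite -mulrA xji_xji mulr0; apply: Gen0.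
- by rewrite mulr1 -[l]mulr1 -io_1; apply: Gen_g.
- rewrite mulrDr mulrDl -scalerAr -scalerAl; apply: Gen_lin; [exact: h1 | exact: h2].
- have -> : l * (x1 * y1) * r = l * x1 * (eps * eps + xji * xij) * y1 * r.
    by rewrite eps_eps -one_split mulr1 !mulrA.
  rewrite split4 -[X in Gen (X + _)]scale1r; apply: Gen_lin; apply: Gen_mul.
  + exact: h1 l eps hl (or_introl erefl).
  + exact: h2 eps r (or_introl erefl) hr.
  + exact: h1 l xji hl (or_intror erefl).
  + exact: h2 xij r (or_intror erefl) hr.
Qed.

Lemma corner_Gen x : in_corner eps x -> Gen x.
Proof.
move=> h; rewrite -h; exact: (Cl_Tp (all_Cl x) (or_introl erefl) (or_introl erefl)).
Qed.

Lemma hom_mat (D : algType k) (h : Abar -> D) : is_alg_hom h ->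
  mat_rel e i j (fun a => h (io a)) (h xij) (h xji).
Proof. by case=> _ hm _; split; try split; rewrite -hm ?m1 ?m2 ?m3 ?m4 ?m5 ?m6. Qed.

Lemma fus_uniq (D : algType k) (h1 h2 : Abar -> D) : is_alg_hom h1 -> is_alg_hom h2 ->
  (forall a, h1 (io a) = h2 (io a)) -> h1 xij = h2 xij -> h1 xji = h2 xji -> forall x, h1 x = h2 x.
Proof.
move=> H1 H2 ha hy hz x; case: hA => hio _ hU.
have hc : is_alg_hom (fun a => h2 (io a)).
  case: hio => a1 a2 a3; case: H2 => b1 b2 b3; split.
  - by move=> c x1 y1; rewrite a1 b1.
  - by move=> x1 y1; rewrite a2 b2.
  - by rewrite a3 b3.
have [h0 [_ _ _ _ hu]] := hU D (fun a => h2 (io a)) (h2 xij) (h2 xji) hc (hom_mat H2).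
by rewrite (hu h1 H1 ha hy hz) (hu h2 H2 (fun _ => erefl) erefl erefl).
Qed.
End Fusion.

Lemma mat_swap (k : fieldType) (A D : algType k) (I : finType) (e : I -> A) i j (g : A -> D) y z :
  mat_rel e i j g y z -> mat_rel e j i g z y.
Proof. by case=> h1 h2 [h3 h4] [h5 h6]; split. Qed.

Lemma hom_comp (k : fieldType) (T1 T2 T3 : algType k) (f : T1 -> T2) (g : T2 -> T3) :
  is_alg_hom f -> is_alg_hom g -> is_alg_hom (fun x => g (f x)).
Proof.
case=> a1 a2 a3 [b1 b2 b3]; split.
- by move=> c x1 y1; rewrite a1 b1.
- by move=> x1 y1; rewrite a2 b2.
- by rewrite a3 b3.
Qed.

Lemma fmapE (k : fieldType) (A Abar : algType k) (io : A -> Abar) (x y ep : Abar) a :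
  fmap io x y ep a = (ep + x) * io a * (ep + y).
Proof.
rewrite /fmap mulrDl !mulrDr !mulrDl.
rewrite -!addrA; congr (_ + _); rewrite addrC -!addrA; congr (_ + _); by rewrite addrC.
Qed.
Lemma hom_id (k : fieldType) (T : algType k) : is_alg_hom (fun x : T => x).
Proof. by split. Qed.

Theorem mainTheorem6
  (k : fieldType) (hk : [pchar k] =i pred0)
  (A : algType k) (hfg : fin_gen A)
  (I : finType) (e : I -> A) (he : base_family e)
  (br : A -> A -> tensor A)
  (hbr : is_double_bracket (fun _ => True) (inBase e predT) br)
  (i1 i2 : I) (hi : i1 != i2)
  (* A_1 = A^f_{e_2 -> e_1} = eps1 Abar1 eps1, eps1 = 1 - e_2 *)
  (Abar1 : algType k) (iota1 : A -> Abar1) (x12 x21 : Abar1)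
  (hA1 : is_fusion_free_product e i1 i2 iota1 x12 x21)
  (br1 : Abar1 -> Abar1 -> tensor Abar1)
  (hbr1 : induced_bracket e i2 br iota1 x12 x21 br1)
  (* A_2 = A^f_{e_1 -> e_2} = eps2 Abar2 eps2, eps2 = 1 - e_1 *)
  (Abar2 : algType k) (iota2 : A -> Abar2) (y21 y12 : Abar2)
  (hA2 : is_fusion_free_product e i2 i1 iota2 y21 y12)
  (br2 : Abar2 -> Abar2 -> tensor Abar2)
  (hbr2 : induced_bracket e i1 br iota2 y21 y12 br2) :
  let eps1 := feps e i2 iota1 in
  let eps2 := feps e i1 iota2 in
  exists phi : Abar1 -> Abar2,
    [/\ (* phi is a k-algebra isomorphism A_1 -> A_2 *)
        (forall x, in_corner eps1 x -> in_corner eps2 (phi x)) /\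
        (forall c x y, in_corner eps1 x -> in_corner eps1 y ->
           phi (c *: x + y) = c *: phi x + phi y),
        (forall x y, in_corner eps1 x -> in_corner eps1 y ->
           phi (x * y) = phi x * phi y) /\ phi eps1 = eps2,
        (forall x y, in_corner eps1 x -> in_corner eps1 y -> phi x = phi y -> x = y) /\
        (forall z, in_corner eps2 z -> exists2 x, in_corner eps1 x & phi x = z),
        (* phi o pi_1 = pi_2 *)
        (forall a, phi (fmap iota1 x12 x21 eps1 a) = fmap iota2 y21 y12 eps2 a) &
        (* phi is an isomorphism of double brackets *)
        (forall x y, in_corner eps1 x -> in_corner eps1 y ->
           teq (br2 (phi x) (phi y)) [seq (phi p.1, phi p.2) | p <- br1 x y])].
Proof.
move=> eps1 eps2.
have hi' : i2 != i1 by rewrite eq_sym.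
pose eh := 1 - e i1 - e i2.
have ee' := ee he.
have e11 : e i1 * e i1 = e i1 by rewrite ee' eqxx.
have e22 : e i2 * e i2 = e i2 by rewrite ee' eqxx.
have e12 : e i1 * e i2 = 0 by rewrite ee' (negbTE hi).
have e21 : e i2 * e i1 = 0 by rewrite ee' (negbTE hi').
have eh1 : eh * e i1 = 0 by rewrite /eh !mulrBl mul1r e11 e21 subrr subr0.
have eh2 : eh * e i2 = 0 by rewrite /eh !mulrBl mul1r e12 e22 subr0 subrr.
have e1h : e i1 * eh = 0 by rewrite /eh !mulrBr mulr1 e11 e12 subrr subr0.
have e2h : e i2 * eh = 0 by rewrite /eh !mulrBr mulr1 e21 e22 subr0 subrr.
have ehh : eh * eh = eh by rewrite {2}/eh !mulrBr mulr1 eh1 eh2 !subr0.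
have ehs : eh + e i1 + e i2 = 1 by rewrite /eh (addrAC (1 - e i1)) !subrK.
have Beh : inBase e predT eh by apply: B_sub; [apply: B_sub; [apply: B_1 | apply: B_e] | apply: B_e].
have io2M := io_mul hA2.
have io2D := io_D hA2.
have io2B := io_B hA2.
have io20 := io_0 hA2.
have io21 := io_1 hA2.
have hom2 : is_alg_hom iota2 by case: hA2.
have hom1 : is_alg_hom iota1 by case: hA1.
have y_1 : y12 * y21 = iota2 (e i1) := m2 hA2.
have y_2 : y21 * y12 = iota2 (e i2) := m1 hA2.
have y_3 : iota2 (e i1) * y12 = y12 := m5 hA2.
have y_4 : y12 * iota2 (e i2) = y12 := m6 hA2.
have y_5 : iota2 (e i2) * y21 = y21 := m3 hA2.
have y_6 : y21 * iota2 (e i1) = y21 := m4 hA2.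
have y_7 : y12 * y12 = 0 := xji_xji he hi' hA2.
have y_8 : y21 * y21 = 0 := xij_xij he hi' hA2.
have y_9 : iota2 (e i2) * y12 = 0 by rewrite -y_3 mulrA -io2M e21 io20 mul0r.
have y_10 : y12 * iota2 (e i1) = 0 by rewrite -y_4 -mulrA -io2M e21 io20 mulr0.
have y_11 : iota2 (e i1) * y21 = 0 by rewrite -y_5 mulrA -io2M e12 io20 mul0r.
have y_12 : y21 * iota2 (e i2) = 0 by rewrite -y_6 -mulrA -io2M e12 io20 mulr0.
have y_13 : iota2 eh * y12 = 0 by rewrite -y_3 mulrA -io2M eh1 io20 mul0r.
have y_14 : y12 * iota2 eh = 0 by rewrite -y_4 -mulrA -io2M e2h io20 mulr0.
have y_15 : iota2 eh * y21 = 0 by rewrite -y_5 mulrA -io2M eh2 io20 mul0r.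
have y_16 : y21 * iota2 eh = 0 by rewrite -y_6 -mulrA -io2M e1h io20 mulr0.
have eps2E : eps2 = iota2 eh + iota2 (e i2) by rewrite /eps2 /feps -io2D /eh subrK io2B io21.
have [F [hF hFio hF12 hF21 _]] := (let: And3 _ _ hU := hA1 in hU) Abar2 iota2 y12 y21 hom2
   (mat_swap (let: And3 _ h _ := hA2 in h)).
have [G [hG hGio hG21 hG12 _]] := (let: And3 _ _ hU := hA2 in hU) Abar1 iota1 x21 x12 hom1
   (mat_swap (let: And3 _ h _ := hA1 in h)).
have FG : forall z, F (G z) = z.
  apply: (fus_uniq hA2 (hom_comp hG hF) (@hom_id _ _)) => //.
  - by move=> a; rewrite hGio hFio.
  - by rewrite hG21 hF21.
  - by rewrite hG12 hF12.
have GF : forall x, G (F x) = x.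
  apply: (fus_uniq hA1 (hom_comp hF hG) (@hom_id _ _)) => //.
  - by move=> a; rewrite hFio hGio.
  - by rewrite hF12 hG12.
  - by rewrite hF21 hG21.
have hFM : forall x y, F (x * y) = F x * F y by case: hF.
have hFL : lin F by case: hF.
have hGM : forall x y, G (x * y) = G x * G y by case: hG.
have hGL : lin G by case: hG.
have hF1 : F 1 = 1 by case: hF.
have hFe1 : F eps1 = iota2 eh + iota2 (e i1).
  rewrite /eps1 /feps (linB hFL) hF1 hFio -io2D -io21 -io2B; congr iota2.
  by rewrite /eh addrAC subrK.
pose P := iota2 eh + y12 + y21.
have PP : P * P = 1.
  rewrite /P ?mulrDl ?mulrDr -?io2M ehh y_13 y_14 y_15 y_16 y_7 y_8 y_1 y_2 !addr0 !add0r.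
  by rewrite -!io2D ehs io21.
have Lm1 : P * F eps1 = feps e i1 iota2 * iota2 eh + y21 * iota2 1.
  rewrite hFe1 -/eps2 eps2E /P ?mulrDl ?mulrDr -?io2M ?ehh ?eh1 ?e1h ?e2h ?eh2 ?e11 ?e12 ?e21 ?e22.
  by rewrite ?y_13 ?y_14 ?y_15 ?y_16 ?y_10 ?y_6 ?io20 ?io21 ?mulr1 ?addr0 ?add0r.
have RW := (ehh, eh1, e1h, e2h, eh2, e11, e12, e21, e22).
have Lm2 : P * F x12 = feps e i1 iota2 * iota2 (e i2) + y21 * iota2 0.
  rewrite hF12 -/eps2 eps2E /P ?mulrDl ?mulrDr -?io2M ?ehh ?eh1 ?e1h ?e2h ?eh2 ?e11 ?e12 ?e21 ?e22.
  by rewrite ?y_13 ?y_14 ?y_15 ?y_16 ?y_7 ?y_2 ?io20 ?io21 ?mulr0 ?mulr1 ?addr0 ?add0r.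
have Rm1 : F eps1 * P = iota2 eh * feps e i1 iota2 + iota2 1 * y12.
  rewrite hFe1 -/eps2 eps2E /P ?mulrDl ?mulrDr -?io2M ?ehh ?eh1 ?e1h ?e2h ?eh2 ?e11 ?e12 ?e21 ?e22.
  by rewrite ?y_13 ?y_14 ?y_15 ?y_16 ?y_3 ?y_11 ?io20 ?io21 ?mul1r ?addr0 ?add0r.
have Rm2 : F x21 * P = iota2 (e i2) * feps e i1 iota2 + iota2 0 * y12.
  rewrite hF21 -/eps2 eps2E /P ?mulrDl ?mulrDr -?io2M ?ehh ?eh1 ?e1h ?e2h ?eh2 ?e11 ?e12 ?e21 ?e22.
  by rewrite ?y_13 ?y_14 ?y_15 ?y_16 ?y_8 ?y_2 ?io20 ?io21 ?mul0r ?addr0 ?add0r.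
have Pf : P * (F eps1 + y12) = feps e i1 iota2 + y21.
  rewrite hFe1 -/eps2 eps2E /P ?mulrDl ?mulrDr -?io2M ?ehh ?eh1 ?e1h ?e2h ?eh2 ?e11 ?e12 ?e21 ?e22.
  rewrite ?y_13 ?y_14 ?y_15 ?y_16 ?y_7 ?y_1 ?y_2 ?y_10 ?y_6 ?io20 ?io21 ?mulr1 ?addr0 ?add0r.
  by rewrite addrA addrAC.
have Pf2 : (F eps1 + y21) * P = feps e i1 iota2 + y12.
  rewrite hFe1 -/eps2 eps2E /P ?mulrDl ?mulrDr -?io2M ?ehh ?eh1 ?e1h ?e2h ?eh2 ?e11 ?e12 ?e21 ?e22.
  rewrite ?y_13 ?y_14 ?y_15 ?y_16 ?y_8 ?y_1 ?y_2 ?y_11 ?y_3 ?io20 ?io21 ?mulr1 ?addr0 ?add0r.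
  by rewrite addrAC.
pose phi := fun x => P * F x * P.
have phiM : forall x y, phi (x * y) = phi x * phi y.
  by move=> x y; rewrite /phi hFM !mulrA -(mulrA (P * F x) P P) PP mulr1.
have phiL : lin phi.
  exact: lin_comp (lin_lr P P) hFL.
have phi_eps : phi eps1 = feps e i1 iota2.
  rewrite /phi -mulrA Rm1 -/eps2 eps2E /P.
  rewrite ?mulrDl ?mulrDr -?io2M ?ehh ?eh1 ?e1h ?e2h ?eh2 ?e11 ?e12 ?e21 ?e22 ?y_1 ?y_2 ?y_3 ?y_4 ?y_5 ?y_6 ?y_7 ?y_8 ?y_9 ?y_10 ?y_11 ?y_12 ?y_13 ?y_14 ?y_15 ?y_16 ?io20 ?io21 ?mulr1 ?mul1r ?mul0r ?mulr0 ?addr0 ?add0r.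
  rewrite ?mulrDl ?mulrDr -?io2M ?ehh ?eh1 ?e1h ?e2h ?eh2 ?e11 ?e12 ?e21 ?e22 ?y_1 ?y_2 ?y_3 ?y_4 ?y_5 ?y_6 ?y_7 ?y_8 ?y_9 ?y_10 ?y_11 ?y_12 ?y_13 ?y_14 ?y_15 ?y_16 ?io20 ?io21 ?mulr1 ?mul1r ?mul0r ?mulr0 ?addr0 ?add0r.
  rewrite ?mulrDl ?mulrDr -?io2M ?ehh ?eh1 ?e1h ?e2h ?eh2 ?e11 ?e12 ?e21 ?e22 ?y_1 ?y_2 ?y_3 ?y_4 ?y_5 ?y_6 ?y_7 ?y_8 ?y_9 ?y_10 ?y_11 ?y_12 ?y_13 ?y_14 ?y_15 ?y_16 ?io20 ?io21 ?mulr1 ?mul1r ?mul0r ?mulr0 ?addr0 ?add0r.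
  done.
have phi_corner : forall x, in_corner eps1 x -> in_corner (feps e i1 iota2) (phi x).
  move=> x hx; rewrite /in_corner -phi_eps -!phiM.
  by rewrite /in_corner in hx; rewrite hx.
have phi_inj : forall x y, phi x = phi y -> x = y.
  move=> x y h; rewrite -(GF x) -(GF y); congr G.
  move: h => /(congr1 (fun z => P * z * P)).
  by rewrite /phi !mulrA !PP !mul1r -!mulrA !PP !mulr1.
have phi_surj : forall z, exists x, phi x = z.
  move=> z; exists (G (P * z * P)).
  by rewrite /phi FG !mulrA !PP !mul1r -!mulrA !PP !mulr1.
have [[h1L h1R h1S h1Lb _] _] := hbr1.
have [[h2L h2R h2S h2Lb _] _] := hbr2.
have Lspan_of : forall l, Lp e i2 iota1 x12 l -> Lspan e i1 iota2 y21 (P * F l).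
  move=> l [-> | ->].
  - by exists eh, 1; split; [exact: Beh | exact: B_1 he | exact: Lm1].
  - by exists (e i2), 0; split; [exact: B_e | exact: B_0 | exact: Lm2].
have Rspan_of : forall r, Rp e i2 iota1 x21 r -> Rspan e i1 iota2 y12 (F r * P).
  move=> r [-> | ->].
  - by exists eh, 1; split; [exact: Beh | exact: B_1 he | exact: Rm1].
  - by exists (e i2), 0; split; [exact: B_e | exact: B_0 | exact: Rm2].
have phi_gen : forall l r a, phi (l * iota1 a * r) = (P * F l) * iota2 a * (F r * P).
  by move=> l r a; rewrite /phi !hFM hFio !mulrA.
pose Qd x y := teq (br2 (phi x) (phi y)) [seq (phi p.1, phi p.2) | p <- br1 x y].
have base : forall l r a l' r' b, Lp e i2 iota1 x12 l -> Rp e i2 iota1 x21 r ->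
    Lp e i2 iota1 x12 l' -> Rp e i2 iota1 x21 r' -> Qd (l * iota1 a * r) (l' * iota1 b * r').
  move=> l r a l' r' b hl hr hl' hr'; rewrite /Qd !phi_gen.
  apply: teq_trans (Gd_span he hbr hi' hA2 hbr2 (Lspan_of _ hl) (Rspan_of _ hr) (Lspan_of _ hl') (Rspan_of _ hr') a b) _.
  apply: teq_sym; apply: teq_trans (teq_map phiL phiL (gen_Gd he hbr hA1 hbr1 hl hr hl' hr' a b)) _.
  by rewrite -map_comp; apply: teq_eq; apply: eq_map => p /=; rewrite !phi_gen.
have right_ext : forall x0, in_corner eps1 x0 ->
    (forall l r a, Lp e i2 iota1 x12 l -> Rp e i2 iota1 x21 r -> Qd x0 (l * iota1 a * r)) ->
    forall y, Gen e i2 iota1 x12 x21 y -> Qd x0 y.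
  move=> x0 hx0 hb y; elim => [l r a hl hr | c y1 y2 g1 IH1 g2 IH2 | y1 y2 g1 IH1 g2 IH2].
  - exact: hb.
  - have c1 := Gen_corner he hi hA1 g1; have c2 := Gen_corner he hi hA1 g2.
    rewrite /Qd phiL.
    apply: teq_trans (h2R c _ _ _ (phi_corner _ hx0) (phi_corner _ c1) (phi_corner _ c2)) _.
    apply: teq_trans (teq_cat (teq_tscale c IH1) IH2) _.
    apply: teq_sym; apply: teq_trans (teq_map phiL phiL (h1R c x0 y1 y2 hx0 c1 c2)) _.
    rewrite map_cat /tscale -!map_comp; apply: teq_eq; congr (_ ++ _); apply: eq_map => p /=.
    by rewrite (linZ phiL).
  - have c1 := Gen_corner he hi hA1 g1; have c2 := Gen_corner he hi hA1 g2.
    rewrite /Qd phiM.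
    apply: teq_trans (h2Lb _ _ _ (phi_corner _ hx0) (phi_corner _ c1) (phi_corner _ c2)) _.
    apply: teq_trans (teq_cat (teq_map (@lin_id _ _) (lin_mulr (phi y2)) IH1)
                              (teq_map (lin_mull (phi y1)) (@lin_id _ _) IH2)) _.
    apply: teq_sym; apply: teq_trans (teq_map phiL phiL (h1Lb x0 y1 y2 hx0 c1 c2)) _.
    rewrite map_cat /tmulr /tmull -!map_comp; apply: teq_eq; congr (_ ++ _); apply: eq_map => p /=;
    by rewrite phiM.
have symQ : forall x y, in_corner eps1 x -> in_corner eps1 y -> Qd x y -> Qd y x.
  move=> x y hx hy H; rewrite /Qd.
  apply: teq_trans (h2S _ _ (phi_corner _ hy) (phi_corner _ hx)) _.
  rewrite toppswap.
  apply: teq_trans (teq_mapS (@lin_opp _ _) (@lin_id _ _) H) _.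
  apply: teq_sym; apply: teq_trans (teq_map phiL phiL (h1S y x hy hx)) _.
  by rewrite toppswap -!map_comp; apply: teq_eq; apply: eq_map => p /=; rewrite (linN phiL).
have gcorner : forall l r a, Lp e i2 iota1 x12 l -> Rp e i2 iota1 x21 r ->
    in_corner eps1 (l * iota1 a * r).
  by move=> l r a hl hr; apply: (Gen_corner he hi hA1); apply: Gen_g.
have step1 : forall l r a, Lp e i2 iota1 x12 l -> Rp e i2 iota1 x21 r ->
    forall y, Gen e i2 iota1 x12 x21 y -> Qd (l * iota1 a * r) y.
  move=> l r a hl hr; apply: right_ext; first exact: gcorner.
  by move=> l' r' b hl' hr'; apply: base.
exists phi; split.
- split; [exact: phi_corner | by move=> c x y _ _; apply: phiL].
- split; [by move=> x y _ _; apply: phiM | exact: phi_eps].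
- split; first by move=> x y _ _; apply: phi_inj.
  move=> z hz; have [x hx] := phi_surj z; exists x => //.
  by apply: phi_inj; rewrite !phiM phi_eps hx.
- move=> a; rewrite /phi !fmapE !hFM (linD hFL eps1 x12) (linD hFL eps1 x21) hF12 hF21 hFio.
  by rewrite !mulrA Pf -mulrA Pf2.
- move=> x y hx hy.
  have gx := corner_Gen he hi hA1 hx; have gy := corner_Gen he hi hA1 hy.
  apply: (right_ext x hx) gy => l r a hl hr.
  apply: symQ => //; first exact: gcorner.
  exact: step1.
Qed.
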